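(* Let $p\ge1$ and for $0<\alpha\le2$ let $Q(\alpha,p)$ be the infimum of all $q$ with the property: for every $\varepsilon>0$ there is $C_\varepsilon>0$ such that $$\int_{B(0,R)}|\mathcal T^\lambda f|^qH(x)\,dx\le C_\varepsilon A_\alpha(H)R^\varepsilon\|f\|_{L^p}^q$$ for all $\lambda\ge1$, $1\le R\le\lambda$, all $f\in L^p$ supported in $(0,1)$ and all $\alpha$-dimensional weights $H$. Then for $0<\beta<\alpha\le2$, $$\frac{Q(\alpha,p)}{\alpha}\le\frac{Q(\beta,p)}{\beta}.$$
   Context: Let $\phi(x,\xi)$, $x\in\mathbb{R}^2$, $\xi\in\mathbb{R}$, be a real smooth function on a neighborhood of $\overline{B(0,1)}\times[0,1]$ satisfying the Carleson–Sjölin condition: the $2\times2$ matrix with rows $\partial_\xi\nabla_x\phi(x,\xi)$ and $\partial_\xi^2\nabla_x\phi(x,\xi)$ has rank 2 everywhere there. Let $a\in C_c^\infty(B(0,1)\times(0,1))$. For $\lambda\ge1$ put $\phi^\lambda(x,\xi)=\lambda\phi(x/\lambda,\xi)$, $a^\lambda(x,\xi)=a(x/\lambda,\xi)$, and for $f$ supported in $(0,1)$, $\mathcal T^\lambda f(x)=\int e^{i\phi^\lambda(x,\xi)}a^\lambda(x,\xi)f(\xi)\,d\xi$. A measurable $H:\mathbb{R}^2\to[0,1]$ is an $\alpha$-dimensional weight if $A_\alpha(H):=\inf\{C\ge0:\int_{B(x_0,r)}H\,dx\le Cr^\alpha\text{ for all }x_0\in\mathbb{R}^2,\ r\ge1\}<\infty$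 (and $H\not\equiv0$). *)

(* Defs.v *)
From HB Require Import structures.
From mathcomp Require Import all_boot all_order all_algebra.
From mathcomp Require Import all_classical all_reals all_analysis.
Set Implicit Arguments. Unset Strict Implicit. Unset Printing Implicit Defensive.
Import Order.TTheory GRing.Theory Num.Theory.
Import numFieldNormedType.Exports.
Local Open Scope classical_set_scope.
Local Open Scope ring_scope.

Section Defs.
Variable R : realType.

(** Functions of (x1, x2, xi) in R^2 x R are curried as R -> R -> R -> R;
    for differentiability we view them on the normed space 'rV[R]_3. *)
Definition lift3 (g : R -> R -> R -> R) : 'rV[R]_3 -> R :=
  fun v => g (v ord0 ord0) (v ord0 (@Ordinal 3 1 isT)) (v ord0 (@Ordinal 3 2 isT)).

Fixpoint iterD (vs : seq 'rV[R]_3) (g : 'rV[R]_3 -> R) : 'rV[R]_3 -> R :=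
  match vs with
  | [::] => g
  | v :: vs' => 'D_v (iterD vs' g)
  end.

Definition smooth_on (U : set 'rV[R]_3) (g : 'rV[R]_3 -> R) : Prop :=
  open U /\
  forall vs : seq 'rV[R]_3,
    (forall x, U x -> {for x, continuous (iterD vs g)}) /\
    (forall v x, U x -> derivable (iterD vs g) x v).

(** standard basis vector e_i of R^3 (coordinates x1, x2, xi) *)
Definition e3 (i : 'I_3) : 'rV[R]_3 := delta_mx ord0 i.

(** the 2x2 matrix with rows  d_xi grad_x phi  and  d_xi^2 grad_x phi *)
Definition CSmatrix (phi : R -> R -> R -> R) (v : 'rV[R]_3) : 'M[R]_2 :=
  \matrix_(i < 2, j < 2)
     iterD (nseq i.+1 (e3 (@Ordinal 3 2 isT)) ++ [:: e3 (widen_ord (isT : 2 <= 3)%N j)])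
           (lift3 phi) v.

Definition Kset : set 'rV[R]_3 :=
  [set v | (v ord0 ord0) ^+ 2 + (v ord0 (@Ordinal 3 1 isT)) ^+ 2 <= 1 /\
           0 <= v ord0 (@Ordinal 3 2 isT) <= 1].

Definition Oset : set 'rV[R]_3 :=
  [set v | (v ord0 ord0) ^+ 2 + (v ord0 (@Ordinal 3 1 isT)) ^+ 2 < 1 /\
           0 < v ord0 (@Ordinal 3 2 isT) < 1].

Definition CS_phase (phi : R -> R -> R -> R) : Prop :=
  exists U : set 'rV[R]_3,
    Kset `<=` U /\ smooth_on U (lift3 phi) /\
    forall v, U v -> \rank (CSmatrix phi v) = 2%N.

(** complex amplitude a = ar + i ai in C_c^infinity(B(0,1) x (0,1)) *)
Definition amplitude (ar ai : R -> R -> R -> R) : Prop :=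
  smooth_on setT (lift3 ar) /\ smooth_on setT (lift3 ai) /\
  let S := closure [set v | lift3 ar v != 0 \/ lift3 ai v != 0] in
  compact S /\ S `<=` Oset.

(** real and imaginary parts of T^lambda f (x), f = fr + i fi, with
    phi^lambda(x,xi) = lambda phi(x/lambda, xi), a^lambda(x,xi) = a(x/lambda, xi) *)
Definition Tre (phi ar ai : R -> R -> R -> R) (lam : R) (fr fi : R -> R)
  (x : R * R) : R :=
  Rintegral lebesgue_measure setT (fun xi =>
    let ph := lam * phi (x.1 / lam) (x.2 / lam) xi in
    let gr := ar (x.1 / lam) (x.2 / lam) xi * fr xi - ai (x.1 / lam) (x.2 / lam) xi * fi xi in
    let gi := ar (x.1 / lam) (x.2 / lam) xi * fi xi + ai (x.1 / lam) (x.2 / lam) xi * fr xi in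
    cos ph * gr - sin ph * gi).

Definition Tim (phi ar ai : R -> R -> R -> R) (lam : R) (fr fi : R -> R)
  (x : R * R) : R :=
  Rintegral lebesgue_measure setT (fun xi =>
    let ph := lam * phi (x.1 / lam) (x.2 / lam) xi in
    let gr := ar (x.1 / lam) (x.2 / lam) xi * fr xi - ai (x.1 / lam) (x.2 / lam) xi * fi xi in
    let gi := ar (x.1 / lam) (x.2 / lam) xi * fi xi + ai (x.1 / lam) (x.2 / lam) xi * fr xi in
    sin ph * gr + cos ph * gi).

Definition Tabs phi ar ai lam fr fi (x : R * R) : R :=
  Num.sqrt (Tre phi ar ai lam fr fi x ^+ 2 + Tim phi ar ai lam fr fi x ^+ 2).

Definition cabs (fr fi : R -> R) (xi : R) : R := Num.sqrt (fr xi ^+ 2 + fi xi ^+ 2).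

Definition in_Lp (p : R) (fr fi : R -> R) : Prop :=
  measurable_fun setT fr /\ measurable_fun setT fi /\
  (\int[lebesgue_measure]_xi (powR (cabs fr fi xi) p)%:E < +oo)%E.

Definition Lpnorm (p : R) (fr fi : R -> R) : R :=
  powR (fine (\int[lebesgue_measure]_xi (powR (cabs fr fi xi) p)%:E)%E) p^-1.

Definition leb2 := (@lebesgue_measure R \x @lebesgue_measure R)%E.

Definition ball2 (x0 : R * R) (r : R) : set (R * R) :=
  [set x | (x.1 - x0.1) ^+ 2 + (x.2 - x0.2) ^+ 2 < r ^+ 2].

Definition A_alpha (alpha : R) (H : R * R -> R) : \bar R :=
  ereal_inf [set C%:E | C in [set C : R | 0 <= C /\
     forall x0 r, 1 <= r ->
       (\int[leb2]_(x in ball2 x0 r) (H x)%:E <= (C * powR r alpha)%:E)%E]].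

Definition is_weight (alpha : R) (H : R * R -> R) : Prop :=
  measurable_fun setT H /\ (forall x, 0 <= H x <= 1) /\
  (A_alpha alpha H < +oo)%E /\ exists x, H x != 0.

Definition good_exponent (phi ar ai : R -> R -> R -> R) (alpha p q : R) : Prop :=
  forall eps : R, 0 < eps -> exists Ce : R, 0 < Ce /\
    forall (lam Rad : R) (fr fi : R -> R) (H : R * R -> R),
      1 <= lam -> 1 <= Rad <= lam ->
      in_Lp p fr fi ->
      (forall xi, ~ (0 < xi < 1) -> fr xi = 0 /\ fi xi = 0) ->
      is_weight alpha H ->
      (\int[leb2]_(x in ball2 (0%R, 0%R) Rad)
          (powR (Tabs phi ar ai lam fr fi x) q * H x)%:E
       <= Ce%:E * A_alpha alpha H * (powR Rad eps * powR (Lpnorm p fr fi) q)%:E)%E.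

Definition Qexp (phi ar ai : R -> R -> R -> R) (alpha p : R) : \bar R :=
  ereal_inf [set q%:E | q in [set q : R | 0 < q /\ good_exponent phi ar ai alpha p q]].

End Defs.

(* Main.v *)
Require Import Defs.
From HB Require Import structures.
From mathcomp Require Import all_boot all_order all_algebra.
From mathcomp Require Import all_classical all_reals all_analysis.
From mathcomp Require Import measurable_realfun.
From mathcomp Require Import ring lra.
Import Order.TTheory GRing.Theory Num.Theory.
Import numFieldNormedType.Exports.
Local Open Scope classical_set_scope.
Local Open Scope ring_scope.
Set Implicit Arguments. Unset Strict Implicit. Unset Printing Implicit Defensive.

Import HBNNSimple.
Section S.
Variable R : realType.
Local Notation T := (R * R)%type.
Local Notation mu := (@leb2 R).

Lemma ball2_meas (x0 : T) r : measurable (ball2 x0 r).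
Proof.
have mf : measurable_fun setT (fun x : T => (x.1 - x0.1) ^+ 2 + (x.2 - x0.2) ^+ 2).
  apply: measurable_funD.
    exact: measurable_funX (measurable_funB measurable_fst (measurable_cst _)).
  exact: measurable_funX (measurable_funB measurable_snd (measurable_cst _)).
have := mf measurableT _ (measurable_itv `]-oo, r ^+ 2[).
rewrite setTI; congr measurable; apply/seteqP; split => x /=;
  by rewrite /ball2 /= in_itv /=.
Qed.

Lemma nnsfun_bound d (T0 : measurableType d) (h : {nnsfun T0 >-> R}) : exists c : R, 0 < c /\ forall x, h x <= c.
Proof.
have := simple_bounded h.
move=> [M [_ HM]].
exists (`|M| + 1); split; first by rewrite ltr_wpDl.
move=> x; have := HM (`|M| + 1) _ x I.
move=> H; apply: le_trans (ler_norm _) (H _).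
rewrite (le_lt_trans (ler_norm _))// ltrDl//.
Qed.

Lemma leb2_ball_fin (Rad : R) : (@leb2 R (ball2 (0%R, 0%R) Rad) < +oo)%E.
Proof.
have sub : ball2 (0%R,0%R) Rad `<=` `[- `|Rad|, `|Rad|] `*` `[- `|Rad|, `|Rad|].
  move=> [a b]; rewrite /ball2 /= !subr0 => h.
  have ha : a ^+ 2 <= `|Rad| ^+ 2.
    by rewrite real_normK ?num_real//; apply: le_trans (ltW h); rewrite lerDl sqr_ge0.
  have hb : b ^+ 2 <= `|Rad| ^+ 2.
    by rewrite real_normK ?num_real//; apply: le_trans (ltW h); rewrite lerDr sqr_ge0.
  split; rewrite /= in_itv /= -ler_norml -(ler_pXn2r (isT : (0 < 2)%N)) ?nnegrE //;
    by rewrite real_normK ?num_real.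
apply: (@le_lt_trans _ _ (@leb2 R (`[- `|Rad|, `|Rad|] `*` `[- `|Rad|, `|Rad|]))).
  apply: le_measure => //; rewrite inE.
    exact: ball2_meas.
  by apply: measurableX; exact: measurable_itv.
rewrite /leb2 product_measure1E; try exact: measurable_itv.
have L : (lebesgue_measure (`[(- `|Rad|)%R, `|Rad|%R]%classic : set R) < +oo)%E.
  by rewrite lebesgue_measure_itv /=; case: ifP => _; rewrite ?ltry.
rewrite lte_mul_pinfty // ge0_fin_numE //.
Qed.
Lemma powR_split (a th : R) : 0 <= a -> powR a (1 - th) * powR a th = a.
Proof.
move=> a0; rewrite -powRD; last by rewrite subrK oner_eq0.
by rewrite subrK powRr1.
Qed.

Lemma indic_powR (A : set T) x e : e != 0 -> powR (\1_A x : R) e = \1_A x.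
Proof.
move=> e0; rewrite indicE; case: (x \in A) => /=.
  by rewrite powR1.
by rewrite powR0.
Qed.

Lemma holder_ball (th p D : R) (h H : T -> R) (Bl : set T) :
  0 < th < 1 -> measurable Bl ->
  measurable_fun setT h -> measurable_fun setT H ->
  (forall x, 0 <= h x) -> (forall x, 0 <= H x) ->
  (\int[mu]_x (h x)%:E = p%:E)%E ->
  (\int[mu]_(x in Bl) (H x)%:E <= D%:E)%E -> 0 <= D ->
  (\int[mu]_(x in Bl) (powR (h x) (1 - th) * powR (H x) th)%:E
     <= (powR p (1 - th) * powR D th)%:E)%E.
Proof.
move=> /andP[th0 th1] mBl mh mH h0 H0 hP HD D0.
have t10 : 0 < 1 - th by rewrite subr_gt0.
have mf : measurable_fun setT (fun x => powR (h x) (1 - th)).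
  exact: (measurableT_comp (measurable_powR _) mh).
have mg : measurable_fun setT (fun x => powR (H x) th * \1_Bl x).
  apply: measurable_funM; first exact: (measurableT_comp (measurable_powR _) mH).
  exact: measurable_indic.
have := @hoelder _ _ _ mu _ _ ((1 - th)^-1) (th^-1) mf mg.
rewrite !invr_gt0 t10 th0 !invrK subrK => /(_ isT isT erefl).
rewrite Lnorm1 !unlock !invrK => hol.
have E0 : (\int[mu]_(x in Bl) (powR (h x) (1 - th) * powR (H x) th)%:E =
   \int[mu]_x `|(powR (h x) (1 - th) * (powR (H x) th * \1_Bl x))%:E|)%E.
  rewrite integral_mkcond; apply: eq_integral => x _ /=.
  rewrite /patch indicE; case: (x \in Bl) => /=.
    by rewrite mulr1 ger0_norm // mulr_ge0 ?powR_ge0.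
  by rewrite !mulr0 normr0.
rewrite E0; apply: (le_trans hol).
rewrite EFinM; apply: lee_pmul; [exact: poweR_ge0|exact: poweR_ge0| |].
  rewrite -poweR_EFin -hP le_eqVlt; apply/orP; left; apply/eqP.
  congr (poweR _ _); apply: eq_integral => x _ /=.
  by rewrite ger0_norm ?powR_ge0 // -powRrM mulfV ?gt_eqF // powRr1.
rewrite -poweR_EFin; apply: gt0_ler_poweR; first exact: ltW.
- by rewrite in_itv /= leey andbT; apply: integral_ge0 => x _; by rewrite /= lee_fin powR_ge0.
- by rewrite in_itv /= lee_fin D0 leey.
apply: le_trans HD; rewrite le_eqVlt; apply/orP; left; apply/eqP.
rewrite [in RHS]integral_mkcond; apply: eq_integral => x _ /=.
rewrite ger0_norm ?mulr_ge0 ?powR_ge0 //.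
rewrite /patch indicE; case: (x \in Bl) => /=.
  by rewrite mulr1 -powRrM mulfV ?gt_eqF // powRr1.
by rewrite mulr0 powR0 // invr_neq0 // gt_eqF.
Qed.
Lemma pw_lower (h F H q s th : R) : 0 < th < 1 -> s * th = q ->
  0 <= h -> 0 <= F -> 0 <= H -> h <= powR F s * H ->
  h <= powR F q * (powR h (1 - th) * powR H th).
Proof.
move=> /andP[th0 th1] sq h0 F0 H0 hle.
rewrite -{1}(powR_split th h0) mulrCA.
apply: ler_wpM2l; first exact: powR_ge0.
have := @ge0_ler_powR R th (ltW th0) h (powR F s * H).
rewrite !nnegrE => /(_ h0 (mulr_ge0 (powR_ge0 _ _) H0) hle).
rewrite powRM ?powR_ge0 // -powRrM sq => ->.
by [].
Qed.

Lemma pw_final (p c' Ce C K th : R) : 0 < th < 1 -> 0 < p -> 0 < c' ->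
  0 <= Ce -> 0 <= C -> 0 <= K ->
  p / c' <= Ce * (powR p (1 - th) * powR C th / c') * K ->
  p <= powR Ce (th^-1) * C * powR K (th^-1).
Proof.
move=> /andP[th0 th1] p0 c0 Ce0 C0 K0 hle.
set pt := powR p (1 - th); set Ct := powR C th.
have e : Ce * (pt * Ct / c') * K = (Ce * pt * Ct * K) / c' by ring.
rewrite e ler_pM2r ?invr_gt0 // in hle.
have e2 : Ce * pt * Ct * K = pt * (K * (Ce * Ct)) by ring.
rewrite e2 -{1}(powR_split th (ltW p0)) -/pt ler_pM2l in hle; last exact: powR_gt0.
have ti0 : 0 <= th^-1 by rewrite invr_ge0 ltW.
have := @ge0_ler_powR R (th^-1) ti0 (powR p th) (K * (Ce * Ct)).
rewrite !nnegrE => /(_ (powR_ge0 _ _)).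
rewrite !mulr_ge0 ?powR_ge0 // => /(_ isT hle).
rewrite -powRrM mulfV ?gt_eqF // powRr1 ?(ltW p0) // => /le_trans; apply.
rewrite !powRM ?mulr_ge0 ?powR_ge0 // /Ct -powRrM mulfV ?gt_eqF // powRr1 //.
by rewrite mulrC.
Qed.

Lemma le_integral_nm (D : set T) (f g : T -> \bar R) :
  (forall x, D x -> (0 <= f x)%E) -> (forall x, D x -> (f x <= g x)%E) ->
  (\int[mu]_(x in D) f x <= \int[mu]_(x in D) g x)%E.
Proof.
move=> f0 fg.
have g0 : forall x, D x -> (0 <= g x)%E.
  by move=> x Dx; exact: le_trans (f0 x Dx) (fg x Dx).
rewrite !ge0_integralE //.
apply: ge_ereal_sup => _ [h hf <-]; apply: le_ereal_sup_tmp.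
exists (sintegral mu h) => //; exists h => // x.
apply: le_trans (hf x) _; rewrite /patch; case: ifP => // /set_mem xD.
exact: fg.
Qed.

Lemma core (alpha beta q Ce K C Rad c : R) (F H h : T -> R) :
  0 < q -> 0 < beta -> beta < alpha -> 0 <= Ce -> 0 <= K -> 0 <= C ->
  1 <= Rad -> 0 < c ->
  (forall G, is_weight beta G ->
     (\int[mu]_(x in ball2 (0%R, 0%R) Rad) (powR (F x) q * G x)%:E
        <= Ce%:E * A_alpha beta G * K%:E)%E) ->
  (forall x, 0 <= F x) ->
  measurable_fun setT H -> (forall x, 0 <= H x <= 1) ->
  (forall x0 r, 1 <= r ->
     (\int[mu]_(x in ball2 x0 r) (H x)%:E <= (C * powR r alpha)%:E)%E) ->
  measurable_fun setT h -> (forall x, 0 <= h x <= c) ->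
  (forall x, ~ ball2 (0%R, 0%R) Rad x -> h x = 0) ->
  (forall x, ball2 (0%R, 0%R) Rad x -> h x <= powR (F x) (q * (alpha / beta)) * H x) ->
  (\int[mu]_x (h x)%:E <= (powR Ce (alpha / beta) * C * powR K (alpha / beta))%:E)%E.
Proof.
move=> q0 b0 ba Ce0 K0 C0 R1 c0 hyp F0 mH H01 HC mh h0c hB hF.
set B := ball2 (0%R, 0%R) Rad.
set th := beta / alpha.
have a0 : 0 < alpha by exact: lt_trans ba.
have th0 : 0 < th by rewrite divr_gt0.
have th1 : th < 1 by rewrite ltr_pdivrMr // mul1r.
have th01 : 0 < th < 1 by rewrite th0 th1.
have thinv : th^-1 = alpha / beta by rewrite invf_div.
have sth : q * (alpha / beta) * th = q.
  by rewrite /th; field; rewrite ?gt_eqF.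
have h0 x : 0 <= h x by have /andP[] := h0c x.
have H0 x : 0 <= H x by have /andP[] := H01 x.
have mB : measurable B by exact: ball2_meas.
set P := (\int[mu]_x (h x)%:E)%E.
have P0 : (0 <= P)%E by apply: integral_ge0 => x _; rewrite lee_fin.
have Pfin : (P < +oo)%E.
  apply: (@le_lt_trans _ _ (\int[mu]_x (c%:E * (\1_B x)%:E))%E).
    apply: ge0_le_integral => //.
    - by move=> x _; rewrite lee_fin.
    - exact/measurable_EFinP.
    - apply/measurable_EFinP.
      have mi : measurable_fun setT (fun x : T => c * \1_B x).
        apply: measurable_funM; first exact: measurable_cst.
        exact: measurable_indic.
      exact: mi.
    move=> x _; rewrite -EFinM lee_fin indicE.
    case: (boolP (x \in B)) => [_|/negP xB]; first by rewrite mulr1; have /andP[] := h0c x.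
    by rewrite mulr0 hB // => /mem_set.
  rewrite ge0_integralZl_EFin //; try (by move=> x _; rewrite lee_fin);
    try (exact: ltW c0); try (by apply/measurable_EFinP; exact: measurable_indic).
  rewrite integral_indic // setIT.
  by rewrite lte_mul_pinfty // ?ge0_fin_numE ?lee_fin ?(ltW c0) ?leb2_ball_fin.
set p := fine P.
have Pp : P = p%:E by rewrite /p fineK // ge0_fin_numE.
have p0 : 0 <= p by rewrite /p fine_ge0.
have RHS0 : 0 <= powR Ce (alpha / beta) * C * powR K (alpha / beta).
  by rewrite !mulr_ge0 ?powR_ge0.
have [pz|pnz] := eqVneq p 0.
  by rewrite Pp pz lee_fin.
have pp : 0 < p by rewrite lt_neqAle eq_sym pnz p0.
set c' := powR c (1 - th).
have c'0 : 0 < c' by rewrite powR_gt0.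
set G := fun x => powR (h x) (1 - th) * powR (H x) th / c'.
have mG : measurable_fun setT G.
  apply: measurable_funM; last exact: measurable_cst.
  apply: measurable_funM.
    exact: (measurableT_comp (measurable_powR _) mh).
  exact: (measurableT_comp (measurable_powR _) mH).
have G0 x : 0 <= G x by rewrite /G !mulr_ge0 ?powR_ge0 // invr_ge0 ltW.
have G1 x : G x <= 1.
  rewrite /G ler_pdivrMr // mul1r -[X in _ <= X]mulr1.
  apply: ler_pM; rewrite ?powR_ge0 //.
    apply: ge0_ler_powR; rewrite ?nnegrE ?(ltW c0) ?h0 //.
      by rewrite subr_ge0 ltW.
    by have /andP[] := h0c x.
  apply: (@le_trans _ _ (powR 1 th)); last by rewrite powR1.
  apply: ge0_ler_powR; rewrite ?nnegrE ?H0 ?ler01 ?(ltW th0) //.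
  by have /andP[] := H01 x.
set C' := powR p (1 - th) * powR C th / c'.
have C'0 : 0 <= C' by rewrite /C' !mulr_ge0 ?powR_ge0 // invr_ge0 ltW.
have Gball : forall x0 r, 1 <= r ->
    (\int[mu]_(x in ball2 x0 r) (G x)%:E <= (C' * powR r beta)%:E)%E.
  move=> x0 r r1.
  have mBl : measurable (ball2 x0 r) by exact: ball2_meas.
  have r0 : 0 <= r by exact: le_trans r1.
  have -> : (\int[mu]_(x in ball2 x0 r) (G x)%:E = \int[mu]_(x in ball2 x0 r)
      ((c'^-1)%:E * (powR (h x) (1 - th) * powR (H x) th)%:E))%E.
    by apply: eq_integral => x _; rewrite /G -EFinM mulrC.
  rewrite ge0_integralZl_EFin //; try (by move=> x _; rewrite lee_fin mulr_ge0 ?powR_ge0);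
    try (by rewrite invr_ge0 ltW).
    have := holder_ball th01 mBl mh mH h0 H0 Pp (HC x0 r r1).
    rewrite mulr_ge0 ?powR_ge0 // => /(_ isT) hol.
    rewrite -lee_pdivlMl ?invr_gt0 // invrK -EFinM.
    apply: (le_trans hol); rewrite lee_fin.
    rewrite powRM ?powR_ge0 // -powRrM (_ : alpha * th = beta); last first.
      by rewrite /th; field; rewrite gt_eqF.
    by rewrite /C'; rewrite le_eqVlt; apply/orP; left; apply/eqP; field; rewrite gt_eqF.
  have mi : measurable_fun setT (fun x : T => (powR (h x) (1 - th) * powR (H x) th)%:E).
    apply/measurable_EFinP; apply: measurable_funM.
      exact: (measurableT_comp (measurable_powR _) mh).
    exact: (measurableT_comp (measurable_powR _) mH).
  exact: measurable_funS mi.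
have AG : (A_alpha beta G <= C'%:E)%E.
  by apply: ereal_inf_lbound; exists C' => //; split.
have A0 : (0 <= A_alpha beta G)%E.
  by apply: le_ereal_inf_tmp => _ [C'' [C''0 _] <-]; rewrite lee_fin.
have exG : exists x, G x != 0.
  apply: contrapT => nex.
  have hz x : h x = 0.
    have : G x == 0 by apply: contrapT => /negP Gx; apply: nex; exists x.
    rewrite /G mulf_eq0 invr_eq0 (gt_eqF c'0) orbF mulf_eq0.
    move=> /orP[/eqP/powR_eq0_eq0 -> //|/eqP/powR_eq0_eq0 Hx0].
    have [Bx|nBx] := pselect (B x); last exact: hB.
    apply/eqP; rewrite eq_le h0 andbT.
    by have := hF x Bx; rewrite Hx0 mulr0.
  have : P = 0%E by rewrite /P; apply: integral0_eq => x _; rewrite hz.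
  by rewrite Pp => -[] /eqP; rewrite (negbTE pnz).
have wG : is_weight beta G.
  split; first exact: mG.
  split; first by move=> x; rewrite G0 G1.
  split; last exact: exG.
  exact: le_lt_trans AG (ltry _).
have low : ((p / c')%:E <= \int[mu]_(x in B) (powR (F x) q * G x)%:E)%E.
  have e1 : (\int[mu]_(x in B) (c'^-1 * h x)%:E = \int[mu]_x (c'^-1 * h x)%:E)%E.
    rewrite integral_mkcond; apply: eq_integral => x _.
    rewrite /patch; case: ifP => // /negP xB.
    by rewrite hB ?mulr0 // => /mem_set.
  have e2 : (\int[mu]_x (c'^-1 * h x)%:E = (p / c')%:E)%E.
    under eq_integral do rewrite EFinM.
    rewrite ge0_integralZl_EFin //; try (by move=> x _; rewrite lee_fin);
      try (by rewrite invr_ge0 ltW); try (exact/measurable_EFinP).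
    by rewrite -/P Pp -EFinM mulrC.
  rewrite -e2 -e1; apply: le_integral_nm => x Bx.
    by rewrite lee_fin mulr_ge0 // invr_ge0 ltW.
  rewrite lee_fin.
  have := pw_lower th01 sth (h0 x) (F0 x) (H0 x) (hF x Bx).
  have -> : powR (F x) q * G x =
      c'^-1 * (powR (F x) q * (powR (h x) (1 - th) * powR (H x) th)).
    by rewrite /G; ring.
  by move=> hle; apply: ler_wpM2l => //; rewrite invr_ge0 ltW.
have hG := hyp G wG.
have fin : ((p / c')%:E <= (Ce * C' * K)%:E)%E.
  apply: (le_trans low); apply: (le_trans hG).
  rewrite (EFinM (Ce * C')) (EFinM Ce C').
  apply: lee_pmul => //; first by rewrite mule_ge0 // lee_fin.
  by apply: lee_pmul => //; rewrite lee_fin.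
rewrite lee_fin in fin.
rewrite Pp lee_fin -thinv; exact: (pw_final th01 pp c'0 Ce0 C0 K0 fin).
Qed.

Lemma core2 (alpha beta q Ce K C Rad : R) (F H : T -> R) :
  0 < q -> 0 < beta -> beta < alpha -> 0 <= Ce -> 0 <= K -> 0 <= C ->
  1 <= Rad ->
  (forall G, is_weight beta G ->
     (\int[mu]_(x in ball2 (0%R, 0%R) Rad) (powR (F x) q * G x)%:E
        <= Ce%:E * A_alpha beta G * K%:E)%E) ->
  (forall x, 0 <= F x) ->
  measurable_fun setT H -> (forall x, 0 <= H x <= 1) ->
  (forall x0 r, 1 <= r ->
     (\int[mu]_(x in ball2 x0 r) (H x)%:E <= (C * powR r alpha)%:E)%E) ->
  (\int[mu]_(x in ball2 (0%R, 0%R) Rad) (powR (F x) (q * (alpha / beta)) * H x)%:E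
     <= (powR Ce (alpha / beta) * C * powR K (alpha / beta))%:E)%E.
Proof.
move=> q0 b0 ba Ce0 K0 C0 R1 hyp F0 mH H01 HC.
have H0 x : 0 <= H x by have /andP[] := H01 x.
rewrite integral_mkcond ge0_integralTE; last first.
  move=> x; rewrite /patch; case: ifP => // _.
  by rewrite lee_fin mulr_ge0 ?powR_ge0.
apply: ge_ereal_sup => _ [h hle <-].
rewrite -integralT_nnsfun.
have [c [c0 hc]] := nnsfun_bound h.
apply: (core q0 b0 ba Ce0 K0 C0 R1 c0 hyp F0 mH H01 HC).
- have mh := measurable_funPT h; exact: mh.
- by move=> x; rewrite hc andbT; exact: fun_ge0.
- move=> x nB; apply/eqP; rewrite eq_le fun_ge0 andbT.
  have := hle x; rewrite /patch; case: ifP => [/set_mem //|_].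
  by rewrite lee_fin.
- move=> x Bx; have := hle x; rewrite /patch; case: ifP => [_|/negP []].
    by rewrite lee_fin.
  exact: mem_set.
Qed.

Lemma andP_intro (a b : bool) : a -> b -> a && b. Proof. by move=> -> ->. Qed.

Lemma transfer (phi ar ai : R -> R -> R -> R) (p alpha beta q : R) :
  0 < beta -> beta < alpha -> 0 < q ->
  good_exponent phi ar ai beta p q ->
  good_exponent phi ar ai alpha p (q * (alpha / beta)).
Proof.
move=> b0 ba q0 gb eps e0.
have a0 : 0 < alpha by exact: lt_trans ba.
have [Ce [Ce0 hCe]] := gb (eps * (beta / alpha)) (mulr_gt0 e0 (divr_gt0 b0 a0)).
exists (powR Ce (alpha / beta)); split; first exact: powR_gt0.
move=> lam Rad fr fi H l1 /andP[R1 Rl] hL hsupp wH.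
set L := Lpnorm p fr fi.
have L0 : 0 <= L by rewrite /L /Lpnorm powR_ge0.
have R0 : 0 <= Rad by exact: le_trans R1.
set K := powR Rad (eps * (beta / alpha)) * powR L q.
have K0 : 0 <= K by rewrite /K mulr_ge0 ?powR_ge0.
have hyp : forall G, is_weight beta G ->
    (\int[mu]_(x in ball2 (0%R, 0%R) Rad) (powR (Tabs phi ar ai lam fr fi x) q * G x)%:E
        <= Ce%:E * A_alpha beta G * K%:E)%E.
  move=> G wG; exact: (hCe lam Rad fr fi G l1 (andP_intro R1 Rl) hL hsupp wG).
have F0 x : 0 <= Tabs phi ar ai lam fr fi x by rewrite /Tabs sqrtr_ge0.
case: (wH) => mH [H01 [Afin _]].
have eK : powR K (alpha / beta) = powR Rad eps * powR L (q * (alpha / beta)).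
  rewrite /K (powRM _ (powR_ge0 _ _) (powR_ge0 _ _)) -(powRrM Rad) -(powRrM L).
  have -> : eps * (beta / alpha) * (alpha / beta) = eps.
    by field; rewrite !gt_eqF.
  by [].
set K' := powR Rad eps * powR L (q * (alpha / beta)).
set Ce' := powR Ce (alpha / beta).
have bound : forall C, 0 <= C -> (forall x0 r, 1 <= r ->
      (\int[mu]_(x in ball2 x0 r) (H x)%:E <= (C * powR r alpha)%:E)%E) ->
    (\int[mu]_(x in ball2 (0%R, 0%R) Rad)
       (powR (Tabs phi ar ai lam fr fi x) (q * (alpha / beta)) * H x)%:E
      <= (Ce' * K' * C)%:E)%E.
  move=> C C0 HC.
  have := core2 q0 b0 ba (ltW Ce0) K0 C0 R1 hyp F0 mH H01 HC.
  by rewrite eK -/K' -/Ce' [Ce' * C * K']mulrAC.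
have W0 : 0 <= Ce' * K' by rewrite /Ce' /K' !mulr_ge0 ?powR_ge0.
rewrite muleAC -EFinM.
have [Wz|Wnz] := eqVneq (Ce' * K') 0.
  have [_ [C [C0 HC] <-] _] := ereal_inf_lt Afin.
  by have := bound C C0 HC; rewrite Wz mul0r mul0e.
have Wp : 0 < Ce' * K' by rewrite lt_neqAle eq_sym Wnz W0.
rewrite -lee_pdivrMl //.
apply: le_ereal_inf_tmp => _ [C [C0 HC] <-].
by rewrite lee_pdivrMl // -EFinM; exact: bound.
Qed.
End S.

Theorem mainTheorem8 (R : realType) (phi ar ai : R -> R -> R -> R) (p alpha beta : R) :
  CS_phase phi -> amplitude ar ai ->
  1 <= p -> 0 < beta -> beta < alpha -> alpha <= 2 ->
  (Qexp phi ar ai alpha p * (alpha^-1)%:E <= Qexp phi ar ai beta p * (beta^-1)%:E)%E.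
Proof.
move=> _ _ _ b0 ba _.
have a0 : 0 < alpha by exact: lt_trans ba.
have ba0 : 0 <= beta / alpha by rewrite ltW // divr_gt0.
have key : (Qexp phi ar ai alpha p * (beta / alpha)%:E <= Qexp phi ar ai beta p)%E.
  apply: le_ereal_inf_tmp => _ [q [q0 gq] <-].
  have hQ : (Qexp phi ar ai alpha p <= (q * (alpha / beta))%:E)%E.
    apply: ereal_inf_lbound; exists (q * (alpha / beta)) => //; split.
      by rewrite mulr_gt0 // divr_gt0.
    exact: transfer.
  have := @lee_wpmul2r R (beta / alpha)%:E _ _ _ hQ.
  rewrite lee_fin ba0 -EFinM => /(_ isT).
  by rewrite (_ : q * (alpha / beta) * (beta / alpha) = q) //; field; rewrite !gt_eqF.
have e : alpha^-1 = beta / alpha * beta^-1 by field; rewrite !gt_eqF.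
rewrite e EFinM muleA; apply: lee_wpmul2r => //.
by rewrite lee_fin invr_ge0 ltW.
Qed.
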